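(* Let $F(x)=\frac{\sqrt{1-2x+5x^2}+x-1}{2x}$ (a power series with $F(0)=0$), and for $n,k\geq0$ let $t_{n,k}=[x^n]\,\frac{1}{x}F(x)^{k+1}$. Then for all $n\geq 0$, $$m_n=\sum_{k=0}^{n}t_{n,k}\,s_k .$$
   Context: Steps: $U=(1,1)$, $D=(1,-1)$, $h=(1,0)$, $H=(2,0)$. A Motzkin path of length $2n$ is a lattice path from $(0,0)$ to $(2n,0)$ with steps $U,D,h$ never going below the $x$-axis; a Schröder path of length $2n$ is the same with steps $U,D,H$. Such a path is symmetric if it has a vertex with $x$-coordinate $n$ and is invariant under reflection in the line $x=n$ (reversing the step sequence and interchanging $U$ and $D$, keeping horizontal steps, gives the same sequence). $m_n$ = number of symmetric Motzkin paths of length $2n$, $s_n$ = number of symmetric Schröder paths of length $2n$. $[x^n]$ denotes the coefficient of $x^n$. *)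

(* Defs.v *)
From HB Require Import structures.
From mathcomp Require Import all_boot all_order all_algebra.
Set Implicit Arguments. Unset Strict Implicit. Unset Printing Implicit Defensive.
Import Order.TTheory GRing.Theory Num.Theory.

(* Steps: U=(1,1), D=(1,-1), h=(1,0), H=(2,0). *)
Inductive step := U | D | Hh | HH.

Definition step_eqb (a b : step) : bool :=
  match a, b with
  | U, U | D, D | Hh, Hh | HH, HH => true
  | _, _ => false
  end.
Lemma step_eqP : Equality.axiom step_eqb.
Proof. by case; case; constructor. Qed.
HB.instance Definition _ := hasDecEq.Build step step_eqP.

Definition xlen_step (s : step) : nat := if s is HH then 2 else 1.
Definition xlen (p : seq step) : nat := sumn (map xlen_step p).

Fixpoint nonneg_ends0 (h : nat) (p : seq step) : bool :=
  match p with
  | [::] => h == 0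
  | U :: p' => nonneg_ends0 h.+1 p'
  | D :: p' => (0 < h) && nonneg_ends0 h.-1 p'
  | _ :: p' => nonneg_ends0 h p'
  end.

Definition is_path (steps : seq step) (n : nat) (p : seq step) : bool :=
  all (fun s => s \in steps) p && (xlen p == n.*2) && nonneg_ends0 0 p.

Definition motzkin_path (n : nat) (p : seq step) := is_path [:: U; D; Hh] n p.
Definition schroder_path (n : nat) (p : seq step) := is_path [:: U; D; HH] n p.

(* reflection in a vertical line: reverse the sequence, swap U and D *)
Definition flip (s : step) : step :=
  match s with U => D | D => U | s => s end.

Definition has_vertex_at (n : nat) (p : seq step) : bool :=
  has (fun i => xlen (take i p) == n) (iota 0 (size p).+1).

Definition symmetric (n : nat) (p : seq step) : bool :=
  has_vertex_at n p && (map flip (rev p) == p).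

Fixpoint words (j : nat) : seq (seq step) :=
  match j with
  | 0 => [:: [::]]
  | j'.+1 => flatten [seq [seq s :: w | w <- words j'] | s <- [:: U; D; Hh; HH]]
  end.

(* all words of length at most L (each exactly once); every path of
   horizontal length 2n has at most 2n steps *)
Definition words_upto (L : nat) : seq (seq step) :=
  flatten [seq words j | j <- iota 0 L.+1].

Definition m_ (n : nat) : nat :=
  count (fun p => motzkin_path n p && symmetric n p) (words_upto n.*2).
Definition s_ (n : nat) : nat :=
  count (fun p => schroder_path n p && symmetric n p) (words_upto n.*2).

Local Open Scope ring_scope.

Definition fps := nat -> rat.

Definition fps_mul (a b : fps) : fps :=
  fun n => \sum_(i < n.+1) a i * b (n - i)%N.

Definition fps_one : fps := fun n => if n is 0%N then 1 else 0.

Fixpoint fps_pow (a : fps) (k : nat) : fps :=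
  match k with
  | 0%N => fps_one
  | k'.+1 => fps_mul a (fps_pow a k')
  end.

(* Formal square root of a series a with a 0 = 1: the unique S with S 0 = 1
   and S * S = a.  Coefficients from S^2 = a:
   2 S_0 S_n + sum_{i=1}^{n-1} S_i S_{n-i} = a_n. *)
Fixpoint sqrt_list (a : fps) (n : nat) : seq rat :=
  match n with
  | 0%N => [:: 1]
  | n'.+1 =>
      let s := sqrt_list a n' in
      rcons s ((a n'.+1 - \sum_(1 <= i < n'.+1) s`_i * s`_(n'.+1 - i)) / 2%:R)
  end.
Definition fps_sqrt (a : fps) : fps := fun n => (sqrt_list a n)`_n.

Definition P_ : fps := fun n =>
  match n with 0%N => 1 | 1%N => -2%:R | 2%N => 5%:R | _ => 0 end.

(* F(x) = (sqrt(1-2x+5x^2) + x - 1) / (2x):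
   [x^n] F = ([x^(n+1)] (sqrt(1-2x+5x^2) + x - 1)) / 2 *)
Definition F_ : fps := fun n =>
  (fps_sqrt P_ n.+1 + (if n is 0%N then 1 else 0)) / 2%:R.

(* t_{n,k} = [x^n] (1/x) F(x)^(k+1) = [x^(n+1)] F(x)^(k+1) *)
Definition t_ (n k : nat) : rat := fps_pow F_ k.+1 n.+1.

(* Main.v *)
Require Import Defs.
From HB Require Import structures.
From mathcomp Require Import all_boot all_order all_algebra.
Import Order.TTheory GRing.Theory Num.Theory.

From mathcomp Require Import ring.
Fixpoint endh (h : nat) (p : seq step) : option nat :=
  match p with
  | [::] => Some h
  | U :: p' => endh h.+1 p'
  | D :: p' => if h is h'.+1 then endh h' p' else None
  | _ :: p' => endh h p'
  end.

Lemma nonneg_endh h p : nonneg_ends0 h p = (endh h p == Some 0).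
Proof.
elim: p h => [|s p IH] h /=; first by case: h.
by case: s => //; case: h.
Qed.

Lemma endh_cat h w v : endh h (w ++ v) = obind (endh^~ v) (endh h w).
Proof. by elim: w h => [|s w IH] h //=; case: s => //; case: h. Qed.

Definition frv (w : seq step) := map flip (rev w).

Lemma frv_cat a b : frv (a ++ b) = frv b ++ frv a.
Proof. by rewrite /frv rev_cat map_cat. Qed.

Lemma flipK : involutive flip. Proof. by case. Qed.

Lemma frvK : involutive frv.
Proof. by move=> w; rewrite /frv -map_rev revK -map_comp (eq_map (g := id)) ?map_id // => x /=; rewrite flipK. Qed.

Lemma endh_frv j k w : endh j w = Some k -> endh k (frv w) = Some j.
Proof.
elim: w j => [|s w IH] j /=; first by case=> ->.
rewrite /frv rev_cons map_rcons -cats1 endh_cat.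
case: s => /=.
- by move/IH => /= ->.
- by case: j => // j /IH ->.
- by move/IH ->.
- by move/IH ->.
Qed.

Lemma xlen_cat a b : xlen (a ++ b) = (xlen a + xlen b)%N.
Proof. by rewrite /xlen map_cat sumn_cat. Qed.

Lemma xlen_frv w : xlen (frv w) = xlen w.
Proof.
elim: w => [|s w IH] //.
by rewrite /frv rev_cons map_rcons -cats1 xlen_cat IH addnC; case: s.
Qed.

Lemma xlen_step_gt0 s : (0 < xlen_step s)%N. Proof. by case: s. Qed.

Lemma size_le_xlen w : (size w <= xlen w)%N.
Proof.
elim: w => [|s w IH] //.
have -> : xlen (s :: w) = (xlen_step s + xlen w)%N by [].
by rewrite /= -add1n leq_add // xlen_step_gt0.
Qed.

Lemma cat_xlen_eq a b c d : a ++ b = c ++ d -> xlen a = xlen c -> a = c.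
Proof.
elim: a c => [|x a IH] [|y c] //=.
- move=> _ /esym/eqP; rewrite /xlen /= addn_eq0 => /andP[/eqP h _].
  by have := xlen_step_gt0 y; rewrite h.
- move=> _ /eqP; rewrite /xlen /= addn_eq0 => /andP[/eqP h _].
  by have := xlen_step_gt0 x; rewrite h.
- move=> [-> e] /eqP; rewrite /xlen /= eqn_add2l => /eqP h.
  by rewrite (IH c e h).
Qed.

Lemma mem_map_cons (a x : step) w l :
  (x :: w \in [seq a :: v | v <- l]) = (x == a) && (w \in l).
Proof.
apply/mapP/andP => [[v vl [-> ->]]|[/eqP -> wl]]; first by [].
by exists w.
Qed.

Lemma nil_map_cons (a : step) l : ([::] \in [seq a :: v | v <- l]) = false.
Proof. by apply/mapP => -[]. Qed.

Lemma mem_flat_cons p (ss : seq step) l :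
  (p \in flatten [seq [seq s :: w | w <- l] | s <- ss]) =
  if p is s :: w then (s \in ss) && (w \in l) else false.
Proof.
elim: ss => [|a ss IH] /=; first by case: p.
rewrite mem_cat IH {IH}; case: p => [|s w]; first by rewrite nil_map_cons.
by rewrite mem_map_cons in_cons andb_orl.
Qed.

Lemma uniq_flat_cons (ss : seq step) l : uniq ss -> uniq l ->
  uniq (flatten [seq [seq s :: w | w <- l] | s <- ss]).
Proof.
elim: ss => [|a ss IH] //= /andP[ans uss] ul.
rewrite cat_uniq IH // andbT map_inj_uniq ?ul; last by move=> x y [].
apply/hasP => -[p]; rewrite mem_flat_cons; case: p => // s w /andP[sss _].
by rewrite mem_map_cons => /andP[/eqP e _]; move: ans; rewrite -e sss.
Qed.

Lemma mem_words j p : (p \in words j) = (size p == j).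
Proof.
elim: j p => [|j IH] p; first by case: p.
rewrite mem_flat_cons; case: p => [//|s w].
by rewrite IH /=; case: s.
Qed.

Lemma uniq_words j : uniq (words j).
Proof. by elim: j => [//|j IH]; apply: uniq_flat_cons. Qed.

Lemma mem_words_upto L p : (p \in words_upto L) = (size p <= L)%N.
Proof.
rewrite /words_upto; apply/flattenP/idP.
  by move=> [l /mapP[j]]; rewrite mem_iota => /andP[_ hj] -> ; rewrite mem_words => /eqP ->.
move=> h; exists (words (size p)); last by rewrite mem_words.
by apply/mapP; exists (size p) => //; rewrite mem_iota.
Qed.

Lemma uniq_words_upto L : uniq (words_upto L).
Proof.
rewrite /words_upto; elim: L.+1 0%N => [//|m IH] i /=.
rewrite cat_uniq uniq_words IH andbT /=.
apply/hasP => -[p /flattenP[l /mapP[k]]]; rewrite mem_iota => /andP[hk _] -> .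
rewrite !mem_words => /eqP -> /eqP e; by move: hk; rewrite e ltnn.
Qed.

Lemma count_uniq_eq (T : eqType) (P : pred T) s t : uniq s -> uniq t ->
  (forall x, (P x && (x \in s)) = (x \in t)) -> count P s = size t.
Proof.
move=> us ut h; rewrite -size_filter; apply: perm_size; apply: uniq_perm.
- exact: filter_uniq.
- exact: ut.
- by move=> x; rewrite mem_filter h.
Qed.

Fixpoint half (hs : step) (f n j : nat) : seq (seq step) :=
  match f with
  | 0%N => if n == 0%N then [:: [::]] else [::]
  | f'.+1 => if n is 0%N then [:: [::]] else
     [seq U :: w | w <- half hs f' n.-1 j.+1] ++
     (if j is j'.+1 then [seq D :: w | w <- half hs f' n.-1 j'] else [::]) ++
     (if (xlen_step hs <= n)%N then [seq hs :: w | w <- half hs f' (n - xlen_step hs) j]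
      else [::])
  end.

Definition good hs n j w :=
  all (mem [:: U; D; hs]) w && (xlen w == n) && (endh j w != None).

Lemma xlen_cons s w : xlen (s :: w) = (xlen_step s + xlen w)%N.
Proof. by []. Qed.

Lemma eq_sub_add a m x : ((a <= m)%N && (x == m - a)) = (a + x == m).
Proof.
case: (leqP a m) => h /=.
  by rewrite -(subnK h) addnK addnC eqn_add2r.
apply/esym/negbTE; apply: contraTneq h => <-; rewrite -leqNgt; exact: leq_addr.
Qed.

Lemma good_nil hs n j : good hs n j [::] = (n == 0%N).
Proof. by rewrite /good /xlen /= andbT eq_sym. Qed.

Lemma good_cons0 hs j s w : good hs 0 j (s :: w) = false.
Proof.
rewrite /good xlen_cons; case: (xlen_step s + xlen w =P 0)%N => [|_]; last by rewrite !andbF.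
by move/eqP; rewrite addn_eq0 => /andP[/eqP h]; have := xlen_step_gt0 s; rewrite h.
Qed.

Lemma mem_half hs : (hs == Hh) || (hs == HH) -> forall f n j w, (n <= f)%N ->
  (w \in half hs f n j) = good hs n j w.
Proof.
move=> hh; elim=> [|f IH] n j w hn.
  move: hn; rewrite leqn0 => /eqP -> /=; rewrite in_cons in_nil orbF.
  by case: w => [|s w]; rewrite ?good_nil ?good_cons0.
case: n hn => [|n] hn.
  by rewrite /= in_cons in_nil orbF; case: w => [|s w]; rewrite ?good_nil ?good_cons0.
have hf : (n <= f)%N by [].
have hf2 : (n.+1 - xlen_step hs <= f)%N.
  by apply: leq_trans hf; rewrite leq_subLR -add1n leq_add2r xlen_step_gt0.
rewrite /= !mem_cat.
case: w => [|s w].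
  rewrite good_nil nil_map_cons /=.
  by case: j => [|j]; case: (_ <= _)%N; rewrite ?nil_map_cons.
have -> : (s :: w \in (if j is j'.+1 then [seq D :: w | w <- half hs f n j'] else [::]))
   = (s == D) && (if j is j'.+1 then good hs n j' w else false).
  by case: j => [|j]; rewrite ?mem_map_cons ?IH ?andbF.
have -> : (s :: w \in (if (xlen_step hs <= n.+1)%N then
             [seq hs :: w | w <- half hs f (n.+1 - xlen_step hs) j] else [::]))
   = (s == hs) && (xlen_step hs <= n.+1)%N && good hs (n.+1 - xlen_step hs) j w.
  case: (_ <= _)%N; rewrite ?mem_map_cons ?IH ?andbT ?andbF //.
rewrite mem_map_cons IH // /good xlen_cons.
case/orP: hh => /eqP ->; case: s => /=. all: try (case: j => [|j] /=). all: rewrite ?add1n ?eqSS ?orbF ?andbF ?subn1 //.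
all: rewrite -[((xlen w).+1 == n)]/(2 + xlen w == n.+1) -eq_sub_add.
all: by case: (1 < n.+1)%N; case: (all _ w); case: (xlen w == _); case: (endh _ w != None).
Qed.

Lemma uniq_map_cons (a : step) l : uniq l -> uniq [seq a :: w | w <- l].
Proof. by move=> ul; rewrite map_inj_uniq // => x y []. Qed.

Lemma disj_cons (a b : step) l1 l2 : a != b ->
  ~~ has (mem [seq a :: w | w <- l1]) [seq b :: w | w <- l2].
Proof.
move=> ab; apply/hasP => -[p /mapP[v _ ->]]; rewrite /= mem_map_cons => /andP[/eqP e _].
by move: ab; rewrite e eqxx.
Qed.

Lemma uniq_half hs : (hs == Hh) || (hs == HH) -> forall f n j, uniq (half hs f n j).
Proof.
move=> hh; elim=> [|f IH] n j /=; first by case: (n == 0%N).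
case: n => [//|n].
have hU : U != hs by case/orP: hh => /eqP ->.
have hD : D != hs by case/orP: hh => /eqP ->.
rewrite cat_uniq uniq_map_cons // has_cat cat_uniq.
have hUD : U != D by [].
case: j => [|j]; case: (_ <= _)%N => /=;
  rewrite ?uniq_map_cons // ?andbT ?has_nil ?orbF ?andbT //=.
all: try (apply/andP; split); try (apply/norP; split); try apply: disj_cons => //.
all: by apply/hasPn.
Qed.

Definition Cnt hs n j := size (half hs n n j).

Lemma Cnt_fuel hs : (hs == Hh) || (hs == HH) -> forall f n j, (n <= f)%N ->
  size (half hs f n j) = Cnt hs n j.
Proof.
move=> hh f n j h; apply: perm_size; apply: uniq_perm; rewrite ?(uniq_half hs) //.
by move=> w; rewrite !(mem_half hs hh).
Qed.

Lemma Cnt0 hs j : Cnt hs 0 j = 1%N.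
Proof. by []. Qed.

Lemma CntS hs : (hs == Hh) || (hs == HH) -> forall n j, Cnt hs n.+1 j =
  (Cnt hs n j.+1 + (if j is j'.+1 then Cnt hs n j' else 0) +
   (if (xlen_step hs <= n.+1)%N then Cnt hs (n.+1 - xlen_step hs) j else 0))%N.
Proof.
move=> hh n j; rewrite /Cnt /= !size_cat size_map addnA; congr (_ + _ + _)%N.
  by case: j => [|j] //; rewrite size_map.
case: ifP => h //; rewrite size_map (Cnt_fuel hs hh) //.
by rewrite leq_subLR -add1n leq_add2r xlen_step_gt0.
Qed.

Definition dbl (w : seq step) := w ++ frv w.

Lemma dbl_inj : injective dbl.
Proof.
move=> w w' e.
have hs : size w = size w'.
  have := congr1 size e; rewrite /dbl !size_cat /frv !size_map !size_rev !addnn.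
  exact: double_inj.
by rewrite -(take_size_cat (frv w) (erefl (size w))) -/(dbl w) e /dbl take_size_cat.
Qed.

Lemma all_frv hs : (hs == Hh) || (hs == HH) -> forall w,
  all (mem [:: U; D; hs]) (frv w) = all (mem [:: U; D; hs]) w.
Proof.
move=> hh w; rewrite /frv all_map all_rev; apply: eq_all => s /=.
by case/orP: hh => /eqP ->; case: s.
Qed.

Lemma charac hs : (hs == Hh) || (hs == HH) -> forall n p,
  (is_path [:: U; D; hs] n p && Defs.symmetric n p && (p \in words_upto n.*2)) =
  (p \in map dbl (half hs n n 0)).
Proof.
move=> hh n p; apply/idP/idP.
  move=> /andP[/andP[/andP[/andP[hall hx] hnn] /andP[hv /eqP hsym]] _].
  move/hasP: hv => [i _ /eqP hxi].
  set w := take i p in hxi; set v := drop i p.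
  have hp : p = w ++ v by rewrite cat_take_drop.
  have hxv : xlen v = n.
    move/eqP: hx; rewrite hp xlen_cat hxi -addnn => /eqP.
    by rewrite eqn_add2l => /eqP.
  have e1 : frv v ++ frv w = w ++ v by rewrite -frv_cat -hp; exact: hsym.
  have e2 : frv v = w by apply: (cat_xlen_eq _ _ _ _ e1); rewrite xlen_frv hxv hxi.
  have hv : v = frv w by rewrite -e2 frvK.
  apply/mapP; exists w; last by rewrite /dbl -hv.
  rewrite (mem_half hs hh) // /good hxi eqxx andbT.
  move: hall; rewrite hp all_cat => /andP[-> _] /=.
  move: hnn; rewrite nonneg_endh hp endh_cat.
  by case: (endh 0 w).
move/mapP=> [w]; rewrite (mem_half hs hh) // /good => /andP[/andP[hall /eqP hxw] hend] ->.
have hx : xlen (dbl w) = n.*2 by rewrite /dbl xlen_cat xlen_frv hxw addnn.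
rewrite /is_path /Defs.symmetric /dbl all_cat hall (all_frv hs hh) hall -/(dbl w) hx eqxx /=.
rewrite mem_words_upto -hx size_le_xlen andbT.
apply/andP; split; last (apply/andP; split).
- rewrite nonneg_endh endh_cat; case E: (endh 0 w) hend => [k|] // _ /=.
  by rewrite (endh_frv _ _ _ E).
- apply/hasP; exists (size w).
    by rewrite mem_iota leq0n add0n ltnS /dbl size_cat leq_addr.
  by rewrite /dbl take_size_cat // hxw.
- by rewrite -/(frv _) /dbl frv_cat frvK.
Qed.

Lemma count_charac hs : (hs == Hh) || (hs == HH) -> forall n,
  count (fun p => is_path [:: U; D; hs] n p && Defs.symmetric n p) (words_upto n.*2) =
  Cnt hs n 0.
Proof.
move=> hh n; rewrite /Cnt -(size_map dbl); apply: count_uniq_eq.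
- exact: uniq_words_upto.
- by rewrite (map_inj_uniq dbl_inj) (uniq_half hs hh).
- by move=> p; rewrite (charac hs hh).
Qed.

Lemma m_Cnt n : m_ n = Cnt Hh n 0.
Proof. exact: (count_charac Hh erefl). Qed.

Lemma s_Cnt n : s_ n = Cnt HH n 0.
Proof. exact: (count_charac HH erefl). Qed.

Local Open Scope ring_scope.

Lemma size_sqrt_list a n : size (sqrt_list a n) = n.+1.
Proof. by elim: n => //= n IH; rewrite size_rcons IH. Qed.

Lemma sqrt_list_stable a i n m : (i <= n)%N -> (n <= m)%N ->
  (sqrt_list a m)`_i = (sqrt_list a n)`_i.
Proof.
move=> hin; elim: m => [|m IH]; first by rewrite leqn0 => /eqP ->.
rewrite leq_eqVlt => /orP[/eqP -> //|]; rewrite ltnS => hnm.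
by rewrite /= nth_rcons size_sqrt_list ltnS (leq_trans hin hnm) IH.
Qed.

Lemma fps_sqrtE a i n : (i <= n)%N -> fps_sqrt a i = (sqrt_list a n)`_i.
Proof. by move=> h; rewrite /fps_sqrt (@sqrt_list_stable a i i n (leqnn i) h). Qed.

Lemma fps_sqrt0 a : fps_sqrt a 0 = 1.
Proof. by []. Qed.

Lemma sqrt_listS a n : sqrt_list a n.+1 = rcons (sqrt_list a n)
  ((a n.+1 - \sum_(1 <= i < n.+1) (sqrt_list a n)`_i * (sqrt_list a n)`_(n.+1 - i)) / 2%:R).
Proof. by []. Qed.

Lemma fps_sqrtS a n : fps_sqrt a n.+1 =
  (a n.+1 - \sum_(1 <= i < n.+1) fps_sqrt a i * fps_sqrt a (n.+1 - i)%N) / 2%:R.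
Proof.
rewrite {1}/fps_sqrt sqrt_listS nth_rcons size_sqrt_list ltnn eqxx.
have E : \sum_(1 <= i < n.+1) (sqrt_list a n)`_i * (sqrt_list a n)`_(n.+1 - i)
   = \sum_(1 <= i < n.+1) fps_sqrt a i * fps_sqrt a (n.+1 - i)%N.
  apply: eq_big_nat => i /andP[i1 i2].
  rewrite (@fps_sqrtE a i n); last by rewrite -ltnS.
  rewrite (@fps_sqrtE a _ n) //.
  by rewrite leq_subLR -add1n leq_add2r.
by rewrite E.
Qed.

Lemma fps_sqrt_sq a : a 0%N = 1 -> forall n, fps_mul (fps_sqrt a) (fps_sqrt a) n = a n.
Proof.
move=> a0 [|n]; first by rewrite /fps_mul big_ord1 fps_sqrt0 mulr1 a0.
rewrite /fps_mul big_ord_recl big_ord_recr /= subn0 subnn fps_sqrt0.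
set s := \sum_(i < n) _.
have -> : s = \sum_(1 <= i < n.+1) fps_sqrt a i * fps_sqrt a (n.+1 - i)%N.
  by rewrite big_add1 /= big_mkord.
rewrite (fps_sqrtS a n); field; by [].
Qed.

Definition tr (N : nat) (a : fps) : {poly rat} := \poly_(i < N) a i.

Lemma coef_tr N a i : (i < N)%N -> (tr N a)`_i = a i.
Proof. by move=> h; rewrite /tr coef_poly h. Qed.

Lemma mul_tr N a b i : (i < N)%N -> fps_mul a b i = (tr N a * tr N b)`_i.
Proof.
move=> h; rewrite coefM /fps_mul; apply: eq_bigr => j _.
have hj : (j <= i)%N by rewrite -ltnS.
rewrite !coef_tr //; first by apply: leq_ltn_trans h; rewrite leq_subr.
exact: leq_ltn_trans h.
Qed.

Lemma pow_tr N a k i : (i < N)%N -> fps_pow a k i = (tr N a ^+ k)`_i.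
Proof.
elim: k i => [|k IH] i h.
  by rewrite expr0 coef1 /fps_one; case: i {h}.
rewrite exprS coefM /= /fps_mul; apply: eq_bigr => j _.
have hj : (j <= i)%N by rewrite -ltnS.
rewrite coef_tr; last exact: leq_ltn_trans h.
by rewrite IH //; apply: leq_ltn_trans h; rewrite leq_subr.
Qed.

Lemma coefMl_eq N (p q r : {poly rat}) : (forall i, (i < N)%N -> p`_i = q`_i) ->
  forall i, (i < N)%N -> (p * r)`_i = (q * r)`_i.
Proof.
move=> E i h; rewrite !coefM; apply: eq_bigr => j _; rewrite E //.
by apply: leq_ltn_trans h; rewrite -ltnS.
Qed.

Lemma F_rel N : forall i, (i < N)%N ->
  (tr N F_)`_i = ('X * (1 + tr N F_ - tr N F_ * tr N F_))`_i.
Proof.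
set f := tr N F_.
set S := fps_sqrt P_.
set s := tr N.+1 S.
set q : {poly rat} := 1 + 'X * (f *+ 2 - 1).
set p : {poly rat} := 1 - 'X *+ 2 + 'X^2 *+ 5.
have hq : forall i, (i < N.+1)%N -> q`_i = s`_i.
  move=> [|i] hi; rewrite /q /s coef_tr // ?coefD ?coef1 ?coefXM //=.
  rewrite coefB coefMn coef1 coef_tr // /S /F_ /=.
  case: i hi => [|i] hi /=; field; by [].
have hqq : forall i, (i < N.+1)%N -> (q * q)`_i = p`_i.
  move=> i hi.
  rewrite (@coefMl_eq _ _ _ q hq) // mulrC (@coefMl_eq _ _ _ s hq) // -mul_tr //.
  rewrite fps_sqrt_sq //.
  rewrite /p !coefD coefN !coefMn coef1 coefX coefXn.
  by case: i {hi} => [|[|[|i]]] /=.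
have id : q * q - p = ('X * (f - 'X * (1 + f - f * f))) *+ 4.
  rewrite /q /p; ring.
move=> i hi.
have := congr1 (fun r : {poly rat} => r`_i.+1) id.
rewrite /= coefB !hqq // subrr coefMn coefXM /= => /esym/eqP.
rewrite -mulr_natr mulf_eq0 => /orP[|]; last by [].
by rewrite coefB subr_eq0 => /eqP.
Qed.

Lemma t_tr N n k : (n.+1 < N)%N -> t_ n k = (tr N F_ ^+ k.+1)`_n.+1.
Proof. by move=> h; rewrite /t_ (@pow_tr N F_ k.+1 n.+1 h). Qed.

Lemma t_rec n k : t_ n.+1 k = (if (k : nat) is k'.+1 then t_ n k' else 0) + t_ n k - t_ n k.+1.
Proof.
set N := n.+3.
have h1 : (n.+1 < N)%N by [].
have h2 : (n.+2 < N)%N by [].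
rewrite (@t_tr N n.+1 k h2) (@t_tr N n k h1) (@t_tr N n k.+1 h1).
set f := tr N F_.
rewrite exprS (@coefMl_eq N _ _ _ (F_rel N)) //.
have -> : 'X * (1 + f - f * f) * f ^+ k = 'X * (f ^+ k + f ^+ k.+1 - f ^+ k.+2).
  rewrite !exprS; move: (f ^+ k) => g; ring.
rewrite coefXM /= !coefD coefN !exprS.
case: k => [|k]; first by rewrite expr0 coef1 add0r.
by rewrite (@t_tr N n k h1) exprS.
Qed.

Lemma F0 N : (0 < N)%N -> (tr N F_)`_0 = 0.
Proof. by move=> h; rewrite F_rel // coefXM. Qed.

Lemma t0k k : t_ 0 k = (k == 0%N)%:R.
Proof.
rewrite (@t_tr 2 0 k erefl).
set f := tr 2 F_.
have f0 : f`_0 = 0 by exact: F0.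
have f1 : f`_1 = 1.
  rewrite /f F_rel // coefXM /= !coefD coefN coef1 coef0M F0 //; by rewrite mulr0 subr0 addr0.
have fk0 : forall j, (f ^+ j)`_0 = (j == 0%N)%:R.
  elim=> [|j IH]; first by rewrite expr0 coef1.
  by rewrite exprS coef0M f0 mul0r.
rewrite exprS coefM big_ord_recr big_ord1 /= f0 mul0r add0r f1 mul1r subnn.
exact: fk0.
Qed.

Lemma t_van n k : (n < k)%N -> t_ n k = 0.
Proof.
elim: n k => [|n IH] k hk.
  by rewrite t0k; case: k hk.
have hk' : (n < k)%N by exact: ltn_trans (ltnSn n) hk.
rewrite t_rec (IH k hk') (IH k.+1); last by exact: ltn_trans hk' (ltnSn k).
case: k hk hk' => [//|k] hk hk'; rewrite IH //.
Qed.

Section MainId.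
Variables a b : nat -> nat -> rat.
Hypothesis a0 : forall j, a 0%N j = 1.
Hypothesis aS : forall n j, a n.+1 j =
  a n j.+1 + (if j is j'.+1 then a n j' else 0) + a n j.
Hypothesis b0 : forall j, b 0%N j = 1.
Hypothesis bS : forall k j, b k.+1 j =
  b k j.+1 + (if j is j'.+1 then b k j' else 0) + (if (k : nat) is k'.+1 then b k' j else 0).

Lemma main_id n : forall j M, (n <= M)%N -> a n j = \sum_(k < M.+1) t_ n k * b k j.
Proof.
elim: n => [|n IH] j M hM.
  rewrite big_ord_recl t0k b0 mulr1 big1 ?addr0 ?a0 // => i _.
  by rewrite t0k mul0r.
case: M hM => [//|M] hM.
have e1 : \sum_(k < M.+2) t_ n.+1 k * b k j =
  \sum_(k < M.+2) (if (k : nat) is k'.+1 then t_ n k' else 0) * b k j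
  + \sum_(k < M.+2) t_ n k * b k j - \sum_(k < M.+2) t_ n k.+1 * b k j.
  rewrite -big_split -sumrB /=; apply: eq_bigr => k _; by rewrite t_rec mulrBl mulrDl.
have e2 : \sum_(k < M.+2) (if (k : nat) is k'.+1 then t_ n k' else 0) * b k j
   = \sum_(k < M.+1) t_ n k * b k.+1 j.
  by rewrite big_ord_recl mul0r add0r.
have e3 : \sum_(k < M.+2) t_ n k * b k j = \sum_(k < M.+1) t_ n k * b k j.
  by rewrite big_ord_recr /= t_van // mul0r addr0.
have e4 : \sum_(k < M.+2) t_ n k.+1 * b k j
   = \sum_(k < M.+1) t_ n k * (if (k : nat) is k'.+1 then b k' j else 0).
  have hM2 : (n < M.+2)%N by exact: ltn_trans hM (ltnSn _).
  rewrite big_ord_recr /= (@t_van n M.+2 hM2) mul0r addr0.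
  rewrite big_ord_recr /= (@t_van n M.+1 hM) mul0r addr0.
  by rewrite [RHS]big_ord_recl /= mulr0 add0r.
rewrite e1 e2 e3 e4 -big_split -sumrB /=.
have e5 : forall k : 'I_M.+1, t_ n k * b k.+1 j + t_ n k * b k j
     - t_ n k * (if val k is k'.+1 then b k' j else 0)
   = t_ n k * b k j.+1 + t_ n k * (if j is j'.+1 then b k j' else 0) + t_ n k * b k j.
  move=> k; rewrite bS; case: k => [[|k'] hk]; case: j {IH e1 e2 e3 e4} => [|j'] /=; ring.
rewrite (eq_bigr _ (fun k _ => e5 k)) !big_split /=.
rewrite aS -!IH //; congr (_ + _ + _).
clear e1 e2 e3 e4 e5; case: j => [|j]; first by rewrite big1 // => k _; rewrite mulr0.
by rewrite -IH.
Qed.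
End MainId.

Theorem theorem3p6 (n : nat) :
  (m_ n)%:R = \sum_(0 <= k < n.+1) t_ n k * (s_ k)%:R :> rat.
Proof.
rewrite big_mkord m_Cnt.
have h := @main_id (fun n j => (Cnt Hh n j)%:R) (fun k j => (Cnt HH k j)%:R).
rewrite (h _ _ _ _ n 0%N n (leqnn n)).
- by apply: eq_bigr => k _; rewrite s_Cnt.
- by move=> j.
- move=> m j; rewrite (CntS Hh erefl) /= subn1 /= !natrD.
  by case: j.
- by move=> j.
- move=> k j; rewrite (CntS HH erefl) /= !natrD.
  by case: j => [|j]; case: k => [|k] //=; rewrite ?subSS ?subn0 ?addr0 //.
Qed.
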